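(* For every $\varepsilon\in\left(0,\tfrac12\right)$, there is a (deterministic) sliding-window $(4+\varepsilon)$-approximation algorithm for the minimum vertex cover, with space $O\!\left(\varepsilon^{-1}n\log^{2}n\right)$ bits; that is, at every time the algorithm outputs a set of vertices that is a vertex cover of the graph formed by the active window $W$ and whose size is at most $(4+\varepsilon)\cdot VC(W)$.
   Context: Graph-streaming sliding-window model: a stream of edge insertions of a simple graph on $V=[n]$ ($n$ known), no edge inserted twice (so window size $w\le n^2$). The window size $w$ is known in advance; the current graph is formed by the last $w$ edges (the active window $W$). The algorithm reads the stream once in order. $VC(W)$ denotes the minimum size of a vertex cover (a vertex set meeting every edge) of the graph on $V$ with edge set $W$. *)

(* Defs.v *)
From mathcomp Require Import all_boot.
From Stdlib Require Import Reals.

Set Implicit Arguments.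
Unset Strict Implicit.
Unset Printing Implicit Defensive.

(* An edge of a simple graph on V = [n] = 'I_n, stored canonically as (u, v) with u < v. *)
Definition Edge (n : nat) := ('I_n * 'I_n)%type.

Definition valid_stream (n : nat) (s : seq (Edge n)) : bool :=
  uniq s && all (fun e : Edge n => (nat_of_ord e.1 < nat_of_ord e.2)%N) s.

Definition window (T : Type) (w : nat) (s : seq T) : seq T := drop (size s - w) s.

Definition is_vertex_cover (n : nat) (W : seq (Edge n)) (C : {set 'I_n}) : bool :=
  all (fun e : Edge n => (e.1 \in C) || (e.2 \in C)) W.

(* VC(W): the minimum size of a vertex cover (setT always is one, of size n). *)
Definition vc_number (n : nat) (W : seq (Edge n)) : nat :=
  \big[minn/n]_(C : {set 'I_n} | is_vertex_cover W C) #|C|.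

Record stream_algorithm (n S : nat) := StreamAlgorithm {
  alg_init : S.-tuple bool;
  alg_step : S.-tuple bool -> Edge n -> S.-tuple bool;
  alg_out  : S.-tuple bool -> {set 'I_n}
}.

Definition run (n S : nat) (A : stream_algorithm n S) (s : seq (Edge n)) : S.-tuple bool :=
  foldl (alg_step A) (alg_init A) s.

Definition log2R (x : R) : R := (ln x / ln 2)%R.

(* Main.v *)
Require Import Defs.
From mathcomp Require Import all_boot.
From mathcomp Require Import zify.
Set Implicit Arguments. Unset Strict Implicit. Unset Printing Implicit Defensive.

Definition gstep (n : nat) (V : {set 'I_n}) (e : Edge n) : {set 'I_n} :=
  if (e.1 \notin V) && (e.2 \notin V) then e.1 |: (e.2 |: V) else V.

Definition G (n : nat) (V : {set 'I_n}) (l : seq (Edge n)) := foldl (@gstep n) V l.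

Lemma gstep_sub n (V : {set 'I_n}) e : V \subset gstep V e.
Proof.
rewrite /gstep; case: ifP => _ //; apply/subsetP => x Hx; by rewrite !in_setU1 Hx !orbT.
Qed.

Lemma G_sub n (V : {set 'I_n}) l : V \subset G V l.
Proof.
elim: l V => [|e l IH] V /=; first exact: subxx.
exact: subset_trans (gstep_sub V e) (IH _).
Qed.

Lemma G_cover n (V : {set 'I_n}) l : is_vertex_cover l (G V l).
Proof.
elim: l V => [|e l IH] V //=.
rewrite /is_vertex_cover /= -/(is_vertex_cover l _) -/(G (gstep V e) l) IH andbT.
have Hs := subsetP (G_sub (gstep V e) l).
have He : (e.1 \in gstep V e) || (e.2 \in gstep V e).
  rewrite /gstep; case: ifP => [_|]; first by rewrite !in_setU1 eqxx.
  by move/negbT; rewrite negb_and !negbK.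
by case/orP: He => H; rewrite (Hs _ H) ?orbT.
Qed.

Lemma gstep_bound n (C V : {set 'I_n}) e : (e.1 \in C) || (e.2 \in C) ->
  #|gstep V e| + 2 * #|C :&: V| <= #|V| + 2 * #|C :&: gstep V e|.
Proof.
move=> HC; rewrite /gstep; case: ifP => [/andP [H1 H2]|_]; last by [].
set V' := _ |: _.
have Hc : #|V'| <= #|V| + 2.
  rewrite /V' !cardsU1 addnA addnC leq_add2l; exact: leq_add (leq_b1 _) (leq_b1 _).
have [v [HvC HvV HvV']] : exists v, [/\ v \in C, v \notin V & v \in V'].
  case/orP: HC => Hv; [exists e.1|exists e.2]; by rewrite ?H1 ?H2 /V' !in_setU1 eqxx ?orbT.
have Hsub : v |: (C :&: V) \subset C :&: V'.
  apply/subsetP => x; rewrite in_setU1 => /orP [/eqP->|]; first by rewrite inE HvC HvV'.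
  rewrite inE => /andP [HxC Hx]; by rewrite inE HxC /V' !in_setU1 Hx !orbT.
have := subset_leq_card Hsub; rewrite cardsU1 inE (negbTE HvV) andbF /=.
clearbody V'; move: Hc; set a := #|C :&: V|; set b := #|C :&: V'|; set c := #|V'|; set d := #|V|; lia.
Qed.

Lemma G_inv n (C : {set 'I_n}) l : is_vertex_cover l C -> forall V,
  #|G V l| + 2 * #|C :&: V| <= #|V| + 2 * #|C :&: G V l|.
Proof.
elim: l => [|e l IH] /=; first by move=> _ V; lia.
rewrite /is_vertex_cover /= => /andP [He Hl] V.
have := IH Hl (gstep V e); have := gstep_bound V He. rewrite /G /=. lia.
Qed.

Lemma G_bound n (C : {set 'I_n}) l V : is_vertex_cover l C ->
  #|G V l| <= #|V| + 2 * #|C|.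
Proof.
move=> HC; have := G_inv HC V.
have : #|C :&: G V l| <= #|C| by apply: subset_leq_card; apply: subsetIl.
lia.
Qed.

Fixpoint push (X : Type) (del : X -> X -> bool) (x : X) (r : seq X) {struct r} : seq X :=
  match r with
  | y :: ((z :: _) as r2) => if del x z then push del x r2 else x :: r
  | _ => x :: r
  end.
Definition reduce X del (l : seq X) := foldr (@push X del) [::] l.

Fixpoint chainP X (ok : X -> X -> Prop) (x : X) (l : seq X) : Prop :=
  match l with [::] => True | y :: l' => ok x y /\ chainP ok y l' end.
Definition chainL X ok (l : seq X) := match l with [::] => True | x :: l' => @chainP X ok x l' end.

Fixpoint good X (del : X -> X -> bool) (l : seq X) : bool :=
  match l with
  | x :: ((y :: z :: _) as r) => ~~ del x z && good del r
  | _ => true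
  end.

Lemma good_tail X (del : X -> X -> bool) (x : X) r : good del (x :: r) -> good del r.
Proof. by case: r => [|y [|z r]] //= /andP []. Qed.

Lemma push_spec (X : eqType) (del : X -> X -> bool) (ok : X -> X -> Prop) x r :
  chainP ok x r -> (forall z, z \in r -> del x z -> ok x z) -> good del r ->
  exists r', [/\ push del x r = x :: r', {subset r' <= r}, last x r' = last x r,
     chainP ok x r' & good del (x :: r')].
Proof.
elim: r => [|y r IH]; first by move=> _ _ _; exists [::]; split.
case: r IH => [|z r3] IH.
  by move=> Hc _ _; exists [:: y]; split.
move=> Hc' Hd Hg; have [Hxy [Hyz Hc]] := Hc'.
have -> : push del x [:: y, z & r3] = if del x z then push del x (z :: r3) else [:: x, y, z & r3] by [].
case: ifP => Hdel.
  have [|||r'' [E1 E2 E3 E4 E5]] := IH.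
  - split; last exact: Hc. by apply: Hd; rewrite // !inE eqxx orbT.
  - by move=> z' Hz'; apply: Hd; rewrite inE Hz' orbT.
  - exact: good_tail Hg.
  exists r''; split => //.
  by move=> u /E2 Hu; rewrite inE Hu orbT.
exists [:: y, z & r3]; split => //=.
by rewrite Hdel.
Qed.

Lemma reduce_spec (X : eqType) (del : X -> X -> bool) (ok : X -> X -> Prop) (l : seq X) :
  (forall x z, x \in l -> z \in l -> del x z -> ok x z) -> chainL ok l ->
  [/\ {subset reduce del l <= l}, chainL ok (reduce del l), good del (reduce del l),
      (reduce del l = [::] -> l = [::]) &
      (forall d, head d (reduce del l) = head d l /\ last d (reduce del l) = last d l)].
Proof.
elim: l => [|x l IH] Hd Hc; first by split.
have [||R1 R2 R3 R4 R56] := IH.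
- by move=> u v Hu Hv; apply: Hd; rewrite inE ?Hu ?Hv orbT.
- by case: l Hc {IH Hd} => [|y l] //= [].
have R5 d := (R56 d).1. have R6 d := (R56 d).2.
have Hch : chainP ok x (reduce del l).
  destruct l as [|y' l']; first by [].
  case E: (reduce del (y' :: l')) R2 => [|y r] R2'.
    by have := R4 E.
  have Hy : y = y' by have := R5 y; rewrite E.
  subst y. split; first by case: Hc.
  exact: R2'.
have Hd' : forall z, z \in reduce del l -> del x z -> ok x z.
  by move=> z Hz; apply: Hd; [exact: mem_head | rewrite inE (R1 _ Hz) orbT].
have [r' [E1 E2 E3 E4 E5]] := push_spec Hch Hd' R3.
have -> : reduce del (x :: l) = x :: r' by rewrite -E1.
split => //.
- move=> u; rewrite inE => /orP [/eqP->|/E2/R1 Hu]; first exact: mem_head.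
  by rewrite inE Hu orbT.
- move=> d /=; split => //. by rewrite E3 -[last x l](R6 x).
Qed.

Lemma chainP_map (X Y : Type) (r1 : X -> X -> Prop) (r2 : Y -> Y -> Prop) (f : X -> Y) x l :
  (forall a b, r1 a b -> r2 (f a) (f b)) -> chainP r1 x l -> chainP r2 (f x) (map f l).
Proof. move=> H; elim: l x => [|y l IH] x //= [H1 H2]; split; auto. Qed.

Lemma chainP_rcons X (ok : X -> X -> Prop) x l y :
  chainP ok x l -> ok (last x l) y -> chainP ok x (rcons l y).
Proof. elim: l x => [|z l IH] x /=; first by move=> _ H; split. move=> [H1 H2] H; split; auto. Qed.

Lemma chainL_nth X (ok : X -> X -> Prop) d l :
  chainL ok l -> forall i, i.+1 < size l -> ok (nth d l i) (nth d l i.+1).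
Proof.
elim: l => [|x l IH] //=.
case: l IH => [|y l] IH //= [Hxy Hc] [|i] Hi //=.
exact: (IH Hc i).
Qed.

Lemma good_drop X (del : X -> X -> bool) k (l : seq X) : good del l -> good del (drop k l).
Proof. elim: k l => [|k IH] [|x l] Hg //=. apply: IH; exact: good_tail Hg. Qed.

Lemma good_chain X (c : X -> nat) m d : forall j (l : seq X),
  good (fun x z => m * c x <= m.+1 * c z) l -> 2 * j < size l ->
  m.+1 ^ j * c (nth d l (2 * j)) <= m ^ j * c (head d l).
Proof.
elim=> [|j IH] l Hg Hs; first by rewrite !expn0 !mul1n muln0 nth0.
case: l Hg Hs => [|x [|y r]] Hg Hs; try (simpl in Hs; lia).
have Hr : good (fun x z => m * c x <= m.+1 * c z) r by exact: good_tail (good_tail Hg).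
have Hs' : 2 * j < size r by move: Hs; rewrite !mulnS /=; lia.
have := IH r Hr Hs'.
have -> : 2 * j.+1 = (2 * j).+2 by rewrite mulnS.
case: r Hg Hr Hs Hs' => [|z r] Hg Hr Hs Hs' Hj; first by rewrite ltn0 in Hs'.
move: Hg; rewrite /= => /andP [Hxz _]; rewrite -ltnNge in Hxz.
rewrite /=.
rewrite !expnS.
apply: (@leq_trans (m.+1 * (m ^ j * c z))).
  by rewrite -mulnA leq_mul2l Hj orbT.
rewrite mulnCA [m * _]mulnC -mulnA leq_mul2l; apply/orP; right.
exact: ltnW.
Qed.

Lemma pow_bern m k : m ^ k.+1 + k * m ^ k <= m * m.+1 ^ k.
Proof.
elim: k => [|k IH]; first by rewrite expn1 expn0 !muln1 addn0.
have H := leq_mul (leqnn m.+1) IH.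
rewrite !expnS in H *.
set a := m ^ k in H *; set b := m.+1 ^ k in H *.
nia.
Qed.

Lemma pow2 m : 0 < m -> 2 * m ^ m <= m.+1 ^ m.
Proof.
move=> Hm; have H := pow_bern m m.
rewrite -(leq_pmul2l Hm). rewrite expnS in H. nia.
Qed.

Lemma pow_big m L : 0 < m -> 2 ^ L * m ^ (m * L) <= m.+1 ^ (m * L).
Proof.
move=> Hm; rewrite !expnM -expnMn.
case: L => [|L]; first by rewrite !expn0.
by rewrite leq_exp2r // pow2.
Qed.

Lemma count_bound X (c : X -> nat) m n L (l : seq X) : 0 < m -> n < 2 ^ L ->
  all (fun x => c x <= n) l -> good (fun x z => m * c x <= m.+1 * c z) l ->
  size l <= 2 * m * L + 2.
Proof.
move=> Hm HL Hall Hg; rewrite leqNgt; apply/negP => Hs.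
case: l Hall Hg Hs => [|d l0] Hall Hg Hs; first by [].
set l := d :: l0 in Hall Hg Hs.
set j := m * L.
have Hs1 : 2 * j < size l by rewrite /j; lia.
have Hc := @good_chain _ c m d _ _ Hg Hs1.
have Hgd := good_drop (2 * j) Hg.
have Hsd : 2 < size (drop (2 * j) l) by rewrite size_drop /j; lia.
case Ed: (drop (2 * j) l) Hgd Hsd => [|x' [|y' [|z' r]]] Hgd Hsd //.
have Hx : nth d l (2 * j) = x' by rewrite -[2 * j]addn0 -nth_drop Ed.
move: Hgd; rewrite /= => /andP [Hxz _]; rewrite -ltnNge in Hxz.
have Hx1 : 0 < c x'.
  case E: (c x') Hxz => [|k] //; by rewrite muln0 ltn0.
have Hhd : c (head d l) <= n by move: Hall => /andP [].
rewrite Hx in Hc.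
have H1 : m.+1 ^ j <= m ^ j * n.
  apply: (leq_trans _ (leq_trans Hc _)).
    by rewrite -{1}[m.+1 ^ j]muln1 leq_mul2l Hx1 orbT.
  exact: leq_mul (leqnn _) Hhd.
have H2 := pow_big L Hm.
have H3 : m ^ j * n < m ^ j * 2 ^ L by rewrite ltn_mul2l HL expn_gt0 Hm.
rewrite -/j in H2. rewrite mulnC in H2. lia.
Qed.

Definition inst n := (nat * {set 'I_n})%type.
Definition delI n m (x z : inst n) := m * #|x.2| <= m.+1 * #|z.2|.
Definition upd n (e : Edge n) (x : inst n) : inst n := (x.1, gstep x.2 e).
Definition Fstep n m (st : nat * seq (inst n)) (e : Edge n) : nat * seq (inst n) :=
  (st.1.+1, reduce (@delI n m) (rcons (map (upd e) st.2) (st.1, gstep set0 e))).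
Definition stOf n m (s : seq (Edge n)) := foldl (@Fstep n m) (0, [::]) s.
Definition seg T (s : seq T) a t := take (t - a) (drop a s).
Definition wit n m (s : seq (Edge n)) a b := exists t, b <= t <= size s /\
  m * #|G set0 (seg s a t)| <= m.+1 * #|G set0 (seg s b t)|.
Definition okI n m (s : seq (Edge n)) (x y : inst n) := y.1 = x.1.+1 \/ wit m s x.1 y.1.
Definition d0 n : inst n := (0, set0).
Definition Inv n m (s : seq (Edge n)) (st : nat * seq (inst n)) :=
 [/\ st.1 = size s,
     (forall x, x \in st.2 -> x.1 < size s /\ x.2 = G set0 (drop x.1 s)),
     (s = [::] -> st.2 = [::]) /\ (s <> [::] -> st.2 <> [::] /\
        (head (d0 n) st.2).1 = 0 /\ (last (d0 n) st.2).1 = (size s).-1),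
     chainL (okI m s) st.2 &
     good (@delI n m) st.2].

Lemma Inv_nil n m : Inv m (@nil (Edge n)) (0, [::]).
Proof. by split. Qed.

Lemma seg_rcons T (s : seq T) e a t : t <= size s -> seg (rcons s e) a t = seg s a t.
Proof.
move=> Ht; rewrite /seg.
case: (leqP a (size s)) => Ha.
  rewrite drop_rcons // -cats1 takel_cat // size_drop; lia.
have -> : t - a = 0 by lia.
by rewrite !take0.
Qed.

Lemma Inv_step n m (s : seq (Edge n)) st e : Inv m s st -> Inv m (rcons s e) (Fstep m st e).
Proof.
move=> [H1 H2 [H3a H3b] H4 H5].
rewrite /Fstep.
set s' := rcons s e.
set new : inst n := (st.1, gstep set0 e).
set l0 := rcons (map (upd e) st.2) new.
have Hss : size s' = (size s).+1 by rewrite size_rcons.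
have Hmem : forall x, x \in l0 -> x.1 < size s' /\ x.2 = G set0 (drop x.1 s').
  move=> x; rewrite mem_rcons inE => /orP [/eqP->|/mapP [y Hy ->]].
    rewrite /= H1 Hss; split => //.
    by rewrite /s' drop_rcons // drop_size.
  have [Hy1 Hy2] := H2 y Hy.
  split; first by rewrite /= Hss ltnS ltnW.
  by rewrite /= /s' drop_rcons ?(ltnW Hy1) // Hy2 /G foldl_rcons.
have Hpers : forall a b : inst n, okI m s a b -> okI m s' a b.
  move=> a b [H|[t [/andP [Ht1 Ht2] Hw]]]; [by left|right].
  exists t; split; first by rewrite Ht1 Hss (leq_trans Ht2 (leqnSn _)).
  by rewrite !seg_rcons.
have Hdel : forall x z, x \in l0 -> z \in l0 -> delI m x z -> okI m s' x z.
  move=> x z Hx Hz Hd; right; exists (size s').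
  have [Hx1 Hx2] := Hmem x Hx; have [Hz1 Hz2] := Hmem z Hz.
  split; first by rewrite leqnn andbT ltnW.
  have Hsg : forall a, seg s' a (size s') = drop a s'.
    by move=> a; rewrite /seg -size_drop take_size.
  by rewrite !Hsg -Hx2 -Hz2.
have Hch : chainL (okI m s') l0.
  rewrite /l0; case Est: st.2 H4 H3b => [|y l'] H4 H3b //=.
  apply: chainP_rcons.
    exact: (chainP_map (r1 := okI m s) (r2 := okI m s') (f := upd e) (fun a b H => Hpers a b H) H4).
  rewrite last_map; left; rewrite /= H1.
  have Hs : s <> [::] by move=> Es; rewrite Es in H3a; rewrite H3a in Est.
  have [_ [_ HL]] := H3b Hs; move: HL => /= ->.
  by rewrite prednK // lt0n size_eq0; apply/eqP.
have [R1 R2 R3 R4 R56] := reduce_spec Hdel Hch.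
split => //.
- by rewrite H1.
- by move=> x /R1 /Hmem.
- split; first by move=> /eqP; rewrite -size_eq0 Hss.
  move=> _; split.
    by move=> /R4; rewrite /l0; case: (map _ _).
  have [-> ->] := R56 (d0 n); split.
    rewrite /l0; case Est: st.2 H3a H3b => [|y l'] H3a H3b /=.
      rewrite H1; case: (eqVneq s [::]) => [->//|/eqP Hs].
      by have [H _] := H3b Hs.
    have Hs : s <> [::] by move=> Es; have := H3a Es.
    by have [_ [/= -> _]] := H3b Hs.
  by rewrite /l0 last_rcons /= H1 Hss.
Qed.

Lemma Inv_stOf n m (s : seq (Edge n)) : Inv m s (stOf m s).
Proof.
elim/last_ind: s => [|s e IH]; first exact: Inv_nil.
by rewrite /stOf foldl_rcons; apply: Inv_step.
Qed.

Definition out n w (st : nat * seq (inst n)) : {set 'I_n} :=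
  let ws := st.1 - w in
  match find (fun x : inst n => ws < x.1) st.2 with
  | 0 => set0
  | i.+1 => (nth (d0 n) st.2 i).2
  end.

Lemma cover_sub n (l l' : seq (Edge n)) C : {subset l' <= l} ->
  is_vertex_cover l C -> is_vertex_cover l' C.
Proof. by move=> Hs /allP H; apply/allP => x /Hs /H. Qed.

Lemma drop_sub T (s : seq T) a b : a <= b -> drop b s = drop (b - a) (drop a s).
Proof. by move=> H; rewrite drop_drop subnK. Qed.

Lemma bound_from n m (s : seq (Edge n)) ws a C : a <= ws ->
  (a = ws \/ exists b, ws < b /\ wit m s a b) -> is_vertex_cover (drop ws s) C ->
  m * #|G set0 (drop a s)| <= (4 * m + 2) * #|C|.
Proof.
move=> Ha [->|[b [Hb [t [/andP [Ht1 Ht2] Hw]]]]] HC.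
  have := G_bound set0 HC; rewrite cards0 add0n => H.
  have := leq_mul (leqnn m) H. nia.
have Hat : a <= t by lia.
have E : drop a s = seg s a t ++ drop t s.
  by rewrite /seg (drop_sub s Hat) cat_take_drop.
have HC1 : is_vertex_cover (drop t s) C.
  apply: cover_sub HC => x; rewrite (@drop_sub _ s ws t); last by lia.
  exact: mem_drop.
have HC2 : is_vertex_cover (seg s b t) C.
  apply: cover_sub HC => x /mem_take; rewrite (@drop_sub _ s ws b); last by lia.
  exact: mem_drop.
have H1 := G_bound (G set0 (seg s a t)) HC1.
have H2 := G_bound set0 HC2; rewrite cards0 add0n in H2.
rewrite E /G foldl_cat -/(G _ _) -/(G _ (drop t s)).
move: H1 H2 Hw.
set g := #|G _ (drop t s)|; set g1 := #|G set0 (seg s a t)|; set g2 := #|G set0 (seg s b t)|.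
set c := #|C|.
nia.
Qed.

Lemma query n m w (s : seq (Edge n)) st : 0 < w -> Inv m s st ->
  is_vertex_cover (window w s) (out w st) /\
  forall C, is_vertex_cover (window w s) C -> m * #|out w st| <= (4 * m + 2) * #|C|.
Proof.
move=> Hw [H1 H2 [H3a H3b] H4 H5].
rewrite /out /window H1.
set ws := size s - w.
case: (eqVneq s [::]) => [Es|/eqP Hs].
  rewrite H3a //=; split; first by rewrite Es.
  by move=> C _; rewrite cards0 muln0.
have [Hne [Hhd Hlast]] := H3b Hs.
case Ef: (find _ _) => [|i].
  move: Ef; case El: st.2 Hne Hhd => [|x0 l'] //= _ ->.
  by rewrite ltn0.
have Hi : i < find (fun x : inst n => ws < x.1) st.2 by rewrite Ef.
have Hisz : i < size st.2 by apply: leq_trans Hi (find_size _ _).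
set x := nth (d0 n) st.2 i.
have [Hx1 Hx2] := H2 x (mem_nth _ Hisz).
have Hxws : x.1 <= ws by have := before_find (d0 n) Hi; rewrite -/x => /negbT; rewrite -leqNgt.
have Hcov : is_vertex_cover (drop ws s) (G set0 (drop x.1 s)).
  apply: cover_sub (G_cover set0 (drop x.1 s)) => y.
  rewrite (drop_sub s Hxws); exact: mem_drop.
rewrite Hx2; split => // C HC.
apply: (bound_from Hxws) HC.
case: (ltnP i.+1 (size st.2)) => Hsz.
  have Hhas : has (fun x : inst n => ws < x.1) st.2 by rewrite has_find Ef.
  have Hy := nth_find (d0 n) Hhas; rewrite Ef in Hy.
  have := chainL_nth (d0 n) H4 Hsz; rewrite -/x.
  case=> [Hxy|Hwit].
    left; move: Hy; rewrite Hxy; lia.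
  by right; exists (nth (d0 n) st.2 i.+1).1.
left.
have Hi' : i = (size st.2).-1 by lia.
have : x.1 = (size s).-1 by rewrite /x Hi' nth_last.
have : 0 < size s by rewrite lt0n size_eq0; apply/eqP.
rewrite /ws; lia.
Qed.

Definition L_of n := (trunc_log 2 n).+1.
Definition K_of m n := 2 * m * L_of n + 2.
Definition S_of m n := 2 * L_of n + (n + 3) * L_of n * K_of m n.
Definition Xf n m := ('I_(n * n).+1 * (K_of m n).-tuple (option ('I_(n * n).+1 * {set 'I_n})))%type.

Lemma size_pad A K (L : seq (option A)) : size (take K (L ++ nseq K None)) == K.
Proof. by rewrite size_takel // size_cat size_nseq leq_addl. Qed.
Definition padT A K (L : seq (option A)) : K.-tuple (option A) := Tuple (size_pad K L).

Definition toX n m (st : nat * seq (inst n)) : Xf n m :=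
  (inord st.1, padT (K_of m n) (map (fun x : inst n => Some (inord x.1, x.2)) st.2)).
Definition fromX n m (x : Xf n m) : nat * seq (inst n) :=
  (val x.1, map (fun p : 'I_(n * n).+1 * {set 'I_n} => (val p.1, p.2)) (pmap id (val x.2))).

Lemma pmap_nseq A k : pmap id (nseq k (@None A)) = [::].
Proof. by elim: k. Qed.

Lemma fromX_toX n m (st : nat * seq (inst n)) : st.1 <= n * n ->
  (forall x, x \in st.2 -> x.1 <= n * n) -> size st.2 <= K_of m n ->
  fromX (toX m st) = st.
Proof.
case: st => t l /= Ht Hl Hs.
rewrite /fromX /toX /= inordK ?ltnS //.
rewrite take_cat size_map ltnNge Hs /= take_nseq ?leq_subr // pmap_cat pmap_nseq cats0.
congr (_, _).
elim: l Hl {Hs} => [|x l IH] Hl //=.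
rewrite inordK; last by rewrite ltnS Hl // mem_head.
rewrite IH; first by case: x {Hl}.
by move=> y Hy; apply: Hl; rewrite inE Hy orbT.
Qed.

Lemma card_setT n : #|{: {set 'I_n}}| = 2 ^ n.
Proof. have := card_powerset [set: 'I_n]; rewrite cardsT card_ord => <-. apply: eq_card => A. by rewrite powersetE subsetT. Qed.

Lemma card_Xf n m : #|{: Xf n m}| <= #|{: (S_of m n).-tuple bool}|.
Proof.
rewrite card_tuple card_bool !card_prod card_tuple card_option card_prod !card_ord card_setT.
set L := L_of n; set K := K_of m n.
have HnL : n < 2 ^ L by apply: trunc_log_ltn.
have HL : 0 < L by [].
have H1 : (n * n).+1 <= 2 ^ (2 * L).
  rewrite mul2n -addnn expnD.
  have : n.+1 <= 2 ^ L by [].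
  move=> H; have := leq_mul H H. nia.
have H2 : (((n * n).+1) * 2 ^ n).+1 <= 2 ^ ((n + 3) * L).
  apply: (@leq_trans (2 ^ (1 + 2 * L + n))).
    rewrite !expnD expn1.
    have : 0 < 2 ^ n by rewrite expn_gt0.
    move: H1; set a := 2 ^ (2 * L); set b := 2 ^ n. nia.
  apply: leq_pexp2l => //. nia.
rewrite /S_of -/L -/K expnD.
apply: leq_mul => //.
rewrite [2 ^ (_ * K)]expnM.
rewrite leq_exp2r; first exact: H2.
by rewrite /K /K_of addn2.
Qed.

Definition enc n m (x : Xf n m) : (S_of m n).-tuple bool :=
  enum_val (widen_ord (card_Xf n m) (enum_rank x)).
Definition dec n m (b : (S_of m n).-tuple bool) : Xf n m :=
  match (insub (val (enum_rank b)) : option 'I_#|{: Xf n m}|) with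
  | Some i => enum_val i | None => toX m (0, [::]) end.
Lemma dec_enc n m x : @dec n m (enc x) = x.
Proof. rewrite /dec /enc enum_valK /= valK. exact: enum_rankK. Qed.

Definition alg n m w : stream_algorithm n (S_of m n) :=
  StreamAlgorithm (enc (toX m (0, [::])))
    (fun b e => enc (toX m (Fstep m (fromX (dec b)) e)))
    (fun b => out w (fromX (dec b))).

Lemma bounded n m (s : seq (Edge n)) : 0 < m -> uniq s ->
  let st := stOf m s in
  [/\ st.1 <= n * n, (forall x, x \in st.2 -> x.1 <= n * n) & size st.2 <= K_of m n].
Proof.
move=> Hm Hu /=.
have [H1 H2 _ _ H5] := Inv_stOf m s.
have Hs : size s <= n * n.
  move/card_uniqP: Hu => <-.
  by have := max_card (mem s); rewrite card_prod card_ord.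
split.
- by rewrite H1.
- by move=> x /H2 [Hx _]; apply: leq_trans Hs; apply: ltnW.
apply: (@count_bound _ (fun x : inst n => #|x.2|) m n) => //.
  exact: trunc_log_ltn.
apply/allP => x _ /=.
by have := max_card (mem x.2); rewrite card_ord.
Qed.

Lemma run_alg n m w (s : seq (Edge n)) : 0 < m -> uniq s ->
  run (alg n m w) s = enc (toX m (stOf m s)).
Proof.
move=> Hm; elim/last_ind: s => [|s e IH] Hu //.
rewrite rcons_uniq in Hu; move/andP: Hu => [_ Hu].
rewrite /run foldl_rcons -/(run _ _) IH //= dec_enc.
have [B1 B2 B3] := bounded Hm Hu.
by rewrite fromX_toX // /stOf foldl_rcons.
Qed.

Lemma alg_out_eq n m w (s : seq (Edge n)) : 0 < m -> uniq s ->
  alg_out (alg n m w) (run (alg n m w) s) = out w (stOf m s).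
Proof.
move=> Hm Hu; rewrite run_alg //= dec_enc.
have [B1 B2 B3] := bounded Hm Hu.
by rewrite fromX_toX.
Qed.

Lemma vc_ind n (W : seq (Edge n)) (P : nat -> Prop) : P n ->
  (forall a b, P a -> P b -> P (minn a b)) ->
  (forall C, is_vertex_cover W C -> P #|C|) -> P (vc_number W).
Proof. move=> H0 H1 H2; rewrite /vc_number; apply: big_ind => //. Qed.

Lemma main_nat n m w (s : seq (Edge n)) : 0 < m -> 0 < w -> valid_stream s ->
  is_vertex_cover (window w s) (alg_out (alg n m w) (run (alg n m w) s)) /\
  m * #|alg_out (alg n m w) (run (alg n m w) s)| <= (4 * m + 2) * vc_number (window w s).
Proof.
move=> Hm Hw /andP [Hu _].
rewrite alg_out_eq //.
have [Hc Hb] := query Hw (Inv_stOf m s).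
split => //.
apply: (vc_ind (P := fun k => m * #|out w (stOf m s)| <= (4 * m + 2) * k)) => //.
- have H : #|out w (stOf m s)| <= n by apply: leq_trans (max_card _) _; rewrite card_ord.
  have := leq_mul (leqnn m) H. nia.
- by move=> a b /= Ha Hb'; case: (leqP a b).
Qed.

From Stdlib Require Import Reals Lra Psatz.
From Stdlib Require ZArith.

Lemma ln_le' (x y : R) : (0 < x)%R -> (x <= y)%R -> (ln x <= ln y)%R.
Proof.
move=> Hx Hxy; case: (Rle_lt_or_eq_dec _ _ Hxy) => H.
  by apply: Rlt_le; apply: ln_increasing.
by rewrite H; apply: Rle_refl.
Qed.

Lemma INR_expn2 t : INR (expn 2 t) = (2 ^ t)%R.
Proof.
elim: t => [|t IH]; first by rewrite expn0 /=.
rewrite expnS -multE mult_INR IH /=; lra.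
Qed.

Lemma INR_mul a b : INR (muln a b) = (INR a * INR b)%R.
Proof. by rewrite -multE mult_INR. Qed.
Lemma INR_add a b : INR (addn a b) = (INR a + INR b)%R.
Proof. by rewrite -plusE plus_INR. Qed.

Lemma log_facts n : (2 <= n)%N ->
  (1 <= log2R (INR n))%R /\ (INR (L_of n) <= 2 * log2R (INR n))%R.
Proof.
move=> Hn.
have Hn2 : (2 <= INR n)%R by have := le_INR 2 n (elimT leP Hn) => /=; lra.
have Hl2 : (0 < ln 2)%R by have := ln_lt_2; lra.
set t := trunc_log 2 n.
have Ht : (expn 2 t <= n)%N by apply: trunc_logP => //; lia.
have HtR : (2 ^ t <= INR n)%R by rewrite -INR_expn2; apply: le_INR; apply/leP.
have Hp : (0 < 2 ^ t)%R by apply: pow_lt; lra.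
have H1 := ln_le' Hp HtR; rewrite ln_pow in H1; last lra.
have H2 : (ln 2 <= ln (INR n))%R by apply: ln_le'; lra.
have Hlog : (INR t <= log2R (INR n) /\ 1 <= log2R (INR n))%R.
  rewrite /log2R; split.
    apply (Rmult_le_reg_r (ln 2)) => //; rewrite /Rdiv Rmult_assoc Rinv_l; lra.
  apply (Rmult_le_reg_r (ln 2)) => //; rewrite /Rdiv Rmult_assoc Rinv_l; lra.
split; first lra.
rewrite /L_of -/t S_INR; lra.
Qed.

Theorem theorem4p6 :
  exists C : R, (0 < C)%R /\
  forall (eps : R) (n w : nat),
    (0 < eps < 1 / 2)%R -> (2 <= n)%N -> (0 < w)%N ->
    exists (S : nat) (A : stream_algorithm n S),
      (INR S <= C * INR n * (log2R (INR n)) ^ 2 / eps)%R /\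
      forall s : seq (Edge n), valid_stream s ->
        is_vertex_cover (window w s) (alg_out A (run A s)) /\
        (INR #|alg_out A (run A s)| <= (4 + eps) * INR (vc_number (window w s)))%R.
Proof.
exists 100%R; split; first lra.
move=> eps n w [He1 He2] Hn Hw.
have Hq : (0 < 2 / eps)%R by apply: Rdiv_lt_0_compat; lra.
have [Ha1 Ha2] := archimed (2 / eps).
set z := up (2 / eps) in Ha1 Ha2.
have Hz0 : (0 <= z)%Z by apply: le_IZR; lra.
set m := Z.to_nat z.
have HmR : INR m = IZR z by rewrite INR_IZR_INZ /m Stdlib.ZArith.Znat.Z2Nat.id.
have Hm0 : (0 < m)%N by apply/ltP; apply: INR_lt; rewrite HmR /=; lra.
have He : (2 <= eps * INR m)%R.
  rewrite HmR; have -> : 2%R = (eps * (2 / eps))%R by field; lra.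
  apply: Rmult_le_compat_l; lra.
exists (S_of m n), (alg n m w); split.
  have [Hl1 HL] := log_facts Hn.
  have Hn2 : (2 <= INR n)%R by have := le_INR 2 n (elimT leP Hn) => /=; lra.
  have Hy : (INR m <= 3 / eps)%R.
    have : (1 <= 1 / eps)%R by apply: (Rmult_le_reg_r eps); [lra| rewrite /Rdiv Rmult_assoc Rinv_l; lra].
    rewrite HmR /Rdiv in Ha2 *; lra.
  rewrite /S_of /K_of; rewrite !(INR_add, INR_mul).
  have -> : INR 2 = 2%R by [].
  have -> : INR 3 = 3%R by rewrite /= ; lra.
  set x := INR (L_of n) in HL *; set y := INR m in Hy He *; set zz := INR n in Hn2 *.
  set l := log2R zz in Hl1 HL *.
  set e := (/ eps)%R.
  have Hee : (2 <= e)%R.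
    rewrite /e; apply: (Rmult_le_reg_r eps); [lra| rewrite Rinv_l; lra].
  rewrite /Rdiv in Hy *; rewrite -/e in Hy *.
  have Hx1 : (1 <= x)%R by rewrite /x /L_of S_INR; have := pos_INR (trunc_log 2 n); lra.
  have Hy0 : (0 < y)%R by rewrite /y HmR; lra.
  have A1 : (y * x <= 6 * e * l)%R by nra.
  have A2 : (2 * y * x + 2 <= 13 * e * l)%R by nra.
  have A3 : ((zz + 3) * (2 * y * x + 2) <= (3 * zz) * (13 * e * l))%R.
    apply: Rmult_le_compat; nra.
  have A4 : (2 <= zz * e * l)%R.
    have : (4 <= zz * e)%R by nra.
    nra.
  have A5 : (2 + (zz + 3) * (2 * y * x + 2) <= 40 * zz * e * l)%R by lra.
  have A6 : (x * (2 + (zz + 3) * (2 * y * x + 2)) <= (2 * l) * (40 * zz * e * l))%R.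
    apply Rmult_le_compat; [lra| |lra|lra].
    apply: Rplus_le_le_0_compat; [lra| apply: Rmult_le_pos; nra].
  have A7 : (0 <= zz * e * l * l)%R.
    apply: Rmult_le_pos; [apply: Rmult_le_pos; [apply: Rmult_le_pos|]|]; lra.
  apply: (Rle_trans _ (x * (2 + (zz + 3) * (2 * y * x + 2)))); first by right; ring.
  apply: (Rle_trans _ _ _ A6).
  rewrite /= Rmult_1_r; nra.
move=> s Hs.
have [Hc Hb] := main_nat Hm0 Hw Hs.
split => //.
set o := #|_|; set v := vc_number _.
have HR : (INR m * INR o <= (4 * INR m + 2) * INR v)%R.
  have := le_INR _ _ (elimT leP Hb).
  rewrite !INR_mul INR_add INR_mul.
  have -> : INR 2 = 2%R by [].
  have -> : INR 4 = 4%R by rewrite /=; lra.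
  done.
have Hv : (0 <= INR v)%R by apply: pos_INR.
have Hm' : (0 < INR m)%R by rewrite HmR; lra.
nra.
Qed.
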